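(* In any $\{K_3,K_4\}$-decomposition of $K_{18}$ with $\alpha=11$, every vertex $x$ of $K_{18}$ satisfies $\alpha_x\in\{1,4\}$.
   Context: A $\{K_3,K_4\}$-decomposition of $K_v$ is a collection of subgraphs, each isomorphic to $K_3$ or $K_4$ (triples and quadruples), such that every edge of $K_v$ lies in exactly one of them. $\alpha$ is the number of copies of $K_3$ in the decomposition, and for a vertex $x$, $\alpha_x$ is the number of copies of $K_3$ in the decomposition containing $x$. *)

(* Defs.v *)
From mathcomp Require Import all_boot.
Set Implicit Arguments. Unset Strict Implicit. Unset Printing Implicit Defensive.

(* A {K3,K4}-decomposition of K_v, vertices 'I_v: a set D of blocks (vertex
   sets of the copies of K3 / K4), each of size 3 or 4, such that every edge
   {x,y} (x != y) of K_v lies in exactly one block. *)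
Definition K34_decomposition (v : nat) (D : {set {set 'I_v}}) : Prop :=
  (forall B, B \in D -> (#|B| == 3) || (#|B| == 4)) /\
  (forall x y : 'I_v, x != y -> #|[set B in D | (x \in B) && (y \in B)]| = 1).

Definition alpha (v : nat) (D : {set {set 'I_v}}) : nat :=
  #|[set B in D | #|B| == 3]|.

Definition alpha_at (v : nat) (D : {set {set 'I_v}}) (x : 'I_v) : nat :=
  #|[set B in D | (#|B| == 3) && (x \in B)]|.

(* Main.v *)
Require Import Defs.
From mathcomp Require Import all_boot.
From mathcomp Require Import zify.

Set Implicit Arguments. Unset Strict Implicit. Unset Printing Implicit Defensive.

Lemma card_sum (T : finType) (S : {set T}) (P : pred T) :
  #|[set B in S | P B]| = \sum_(B in S) (P B : nat).
Proof.
rewrite -sum1_card big_mkcond /= [RHS]big_mkcond /=.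
by apply: eq_bigr => B _; rewrite inE; case: (B \in S); case: (P B).
Qed.

Lemma dc (D : {set {set 'I_18}}) (w : {set 'I_18} -> nat) :
  \sum_(y : 'I_18) \sum_(B in D) w B * (y \in B) = \sum_(B in D) w B * #|B|.
Proof.
rewrite exchange_big /=; apply: eq_bigr => B _.
rewrite -big_distrr /=; congr (_ * _).
rewrite -sum1_card [RHS]big_mkcond /=.
by apply: eq_bigr => y _; case: (y \in B).
Qed.

Theorem mainTheorem6 (D : {set {set 'I_18}}) :
  K34_decomposition D -> alpha D = 11 ->
  forall x : 'I_18, (alpha_at D x = 1) \/ (alpha_at D x = 4).
Proof.
move=> [HD1 HD2] Hal x.
set t := fun y : 'I_18 => \sum_(B in D) ((#|B| == 3) && (y \in B) : nat).
set q := fun y : 'I_18 => \sum_(B in D) ((#|B| == 4) && (y \in B) : nat).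
set N := fun y z : 'I_18 => \sum_(B in D) ((y \in B) * (z \in B)).
have HN : forall y z, y != z -> N y z = 1.
  move=> y z /HD2; rewrite card_sum => <-.
  by apply: eq_bigr => B _; rewrite mulnb.
have Hat : forall y, alpha_at D y = t y by move=> y; rewrite /alpha_at card_sum.
have Hal' : \sum_(B in D) ((#|B| == 3) : nat) = 11 by move: Hal; rewrite /alpha card_sum.
have Hdeg : forall y, 2 * t y + 3 * q y = 17.
  move=> y.
  have E1 := dc D (fun B => (y \in B) : nat).
  rewrite (bigD1 y) //= in E1.
  have E2 : \sum_(i | i != y) \sum_(B in D) (y \in B) * (i \in B) = 17.
    rewrite (eq_bigr (fun _ => 1)); last first.
      by move=> i Hi; have := HN y i; rewrite eq_sym Hi => /(_ isT).
    by rewrite sum1_card cardC1 card_ord.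
  rewrite E2 in E1.
  have E3 : \sum_(B in D) (y \in B) * #|B| =
     \sum_(B in D) ((y \in B) * (y \in B)) + (2 * t y + 3 * q y).
    rewrite /t /q !big_distrr -!big_split /=.
    apply: eq_bigr => B HB.
    by move/HD1: HB => /orP[/eqP-> | /eqP->]; case: (y \in B).
  by rewrite E3 in E1; move/addnI: E1.
have Ht : forall y, t y = 1 \/ t y = 4 \/ t y = 7.
  move=> y; have := Hdeg y; lia.
rewrite Hat.
case: (Ht x) => [->|[->|Hx7]]; [by left | by right |].
exfalso.
set w := fun B : {set 'I_18} => ((#|B| == 3) && (x \notin B) : nat).
set r := \sum_(B in D) w B.
set e := fun y : 'I_18 => \sum_(B in D) (w B * (y \in B)).
set n := fun y : 'I_18 => \sum_(B in D) (((#|B| == 4) && (x \in B) : nat) * (y \in B)).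
set m := fun y : 'I_18 => \sum_(B in D) (((#|B| == 3) && (x \in B) : nat) * (y \in B)).
have Hr : t x + r = 11.
  rewrite -Hal' /t /r -big_split /=; apply: eq_bigr => B _.
  by rewrite /w; case: (#|B| == 3); case: (x \in B).
have Hqx : q x = 1 by have := Hdeg x; lia.
have Ha : forall y, t y = m y + e y.
  move=> y; rewrite /t /m /e -big_split /=; apply: eq_bigr => B _.
  by rewrite /w; case: (#|B| == 3); case: (x \in B); case: (y \in B).
have Hb : forall y, y != x -> m y + n y = 1.
  move=> y Hy; rewrite -(HN x y); last by rewrite eq_sym.
  rewrite /m /n -big_split /=; apply: eq_bigr => B HB.
  by move/HD1: HB => /orP[/eqP-> | /eqP->]; case: (x \in B); case: (y \in B).
have Hc : forall y, e y <= r.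
  move=> y; rewrite /e /r; apply: leq_sum => B _.
  by rewrite /w; case: (_ && _); case: (y \in B).
have Hd : \sum_y e y = 12.
  rewrite /e dc.
  rewrite (eq_bigr (fun B => 3 * w B)); last first.
    by move=> B _; rewrite /w; case: eqP => //= ->; rewrite mulnC.
  rewrite -big_distrr /= -/r; lia.
have He : \sum_y n y = 4.
  rewrite /n (dc D (fun B => ((#|B| == 4) && (x \in B) : nat))) /=.
  rewrite (_ : \sum_(B in D) ((#|B| == 4) && (x \in B) : nat) * #|B| = 4 * q x); first by rewrite Hqx.
  rewrite /q big_distrr; apply: eq_bigr => B _ /=.
  by case: eqP => //= ->; rewrite mulnC.
have Hex : e x = 0.
  by rewrite /e big1 // => B _; rewrite /w; case: (x \in B); rewrite ?andbF ?muln0.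
have Hlow : forall y, e y < 3 -> e y <= n y.
  move=> y Hy; case: (eqVneq y x) => [->|Hyx]; first by rewrite Hex.
  have := Ht y; have := Ha y; have := Hb y Hyx; have := Hc y; lia.
have Hpair : forall y z, y != z -> 3 <= e y -> 3 <= e z -> False.
  move=> y z Hyz Hy Hz.
  have : e y + e z <= N y z + r.
    rewrite /e /N /r -!big_split /=; apply: leq_sum => B _.
    by rewrite /w; case: (_ && _); case: (y \in B); case: (z \in B).
  rewrite HN //; lia.
case: (pickP (fun y => 3 <= e y)) => [y0 Hy0 | Hnone].
  have Hs : \sum_y e y <= 4 + \sum_y n y.
    rewrite (bigD1 y0) //= (bigD1 y0 (F := n)) //=.
    have := Hc y0.
    have : \sum_(i | i != y0) e i <= \sum_(i | i != y0) n i.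
      apply: leq_sum => i Hi; apply: Hlow.
      rewrite ltnNge; apply/negP => Hi3; apply: (Hpair y0 i) Hy0 Hi3; by rewrite eq_sym.
    move=> H1 H2; rewrite addnA; apply: leq_add; last exact: H1.
    have : r = 4 by lia.
    lia.
  lia.
have Hs : \sum_y e y <= \sum_y n y.
  apply: leq_sum => i _; apply: Hlow; by rewrite ltnNge Hnone.
lia.
Qed.
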